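(* Suppose Assumptions 1, 2, 3 and 4 below hold (with all expectations involved finite). Let $\alpha=\big(P(D_{11}=1)-P(D_{10}=1)\big)/DID_D$, let $S'=\{D(0)\neq D(1),\,G=0\}$ and $\Delta'=E\big(Y(1)-Y(0)\mid S',T=1\big)$ (with the convention that $(1-\alpha)\Delta'=0$ when $P(S')=0$, in which case $\alpha=1$). Then 1. $W_{DID}=\alpha\Delta+(1-\alpha)\Delta'$. 2. If in addition either $\Delta=\Delta'$, or Assumption 5 holds, then $W_{DID}=\Delta$.
   Context: Standing framework. Let $(Y(0),Y(1),V,G,T)$ be random variables on a common probability space, with $G\in\{0,1\}$ (group; $G=1$ is the ''treatment group''), $T\in\{0,1\}$ (period), $V$ real-valued, and let $(v_{gt})_{(g,t)\in\{0,1\}^2}$ be real constants. The treatment is $D=1\{V\geq v_{GT}\}$ and the potential treatments are $D(t)=1\{V\geq v_{Gt}\}$, $t\in\{0,1\}$, so that $D=D(T)$. The observed outcome is $Y=DY(1)+(1-D)Y(0)$. For any random variable $R$, $R_{gt}$ denotes a random variable distributed as $R$ conditional on $\{G=g,T=t\}$ and $R_{dgt}$ one distributed as $R$ conditional on $\{D=d,G=g,T=t\}$; e.g. $Y_{gt}(d)$ is distributed as $Y(d)$ given $G=g,T=t$. $F_R$ is the cdf of $R$, $F_{R\mid A}$ its cdf conditional on $A$, and for a nondecreasing $F$, $F^{-1}(q)=\inf\{x\in\mathbb{R}:F(x)\geq q\}$. Let $S=\{D(0)<D(1),\,G=1\}$ (treatment-group switchers) and $\Delta=E(Y(1)-Y(0)\mid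 S,T=1)$. Assumption 1: $D=1\{V\geq v_{GT}\}$ with $V$ independent of $T$ conditional on $G$. Assumption 2: $E(D_{11})>E(D_{10})$ and $E(D_{11})-E(D_{10})>E(D_{01})-E(D_{00})$. Assumption 3 (common trends): $E(Y(0)\mid G,T=1)-E(Y(0)\mid G,T=0)$ does not depend on $G$. Assumption 4: $E(Y(1)-Y(0)\mid G,T=1,D(0)=1)=E(Y(1)-Y(0)\mid G,T=0,D(0)=1)$. Assumption 5: $0<E(D_{01})=E(D_{00})<1$. For any random variable $R$, $DID_R=E(R_{11})-E(R_{10})-\big(E(R_{01})-E(R_{00})\big)$, and $W_{DID}=DID_Y/DID_D$. *)

(* Defs.v *)
From mathcomp Require Import all_boot all_order all_algebra.
From mathcomp Require Import all_classical all_reals all_analysis.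
Set Implicit Arguments. Unset Strict Implicit. Unset Printing Implicit Defensive.
Import Order.TTheory GRing.Theory Num.Theory.
Local Open Scope classical_set_scope.
Local Open Scope ring_scope.

Definition prob d (Om : measurableType d) (R : realType)
  (P : probability Om R) (A : set Om) : R := fine (P A).

(* E(X | A) := E(X 1_A) / P(A)  (equals 0 when P(A) = 0, by x/0 = 0) *)
Definition cexp d (Om : measurableType d) (R : realType)
  (P : probability Om R) (X : Om -> R) (A : set Om) : R :=
  fine (\int[P]_(w in A) (X w)%:E) / prob P A.

Definition cell (Om : Type) (G Tm : Om -> bool) (g t : bool) : set Om :=
  [set w | G w = g /\ Tm w = t].

Definition Egt d (Om : measurableType d) (R : realType)
  (P : probability Om R) (G Tm : Om -> bool) (X : Om -> R) (g t : bool) : R :=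
  cexp P X (cell G Tm g t).

Definition DID d (Om : measurableType d) (R : realType)
  (P : probability Om R) (G Tm : Om -> bool) (X : Om -> R) : R :=
  Egt P G Tm X true true - Egt P G Tm X true false
  - (Egt P G Tm X false true - Egt P G Tm X false false).

Definition Dpot (Om : Type) (R : realType) (v : bool -> bool -> R)
  (V : Om -> R) (G : Om -> bool) (t : bool) (w : Om) : bool :=
  v (G w) t <= V w.

Definition Dtr (Om : Type) (R : realType) (v : bool -> bool -> R)
  (V : Om -> R) (G Tm : Om -> bool) (w : Om) : bool :=
  Dpot v V G (Tm w) w.

Definition Yobs (Om : Type) (R : realType) (v : bool -> bool -> R)
  (V : Om -> R) (G Tm : Om -> bool) (Y0 Y1 : Om -> R) (w : Om) : R :=
  (Dtr v V G Tm w)%:R * Y1 w + (1 - (Dtr v V G Tm w)%:R) * Y0 w.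

(* Main.v *)
Require Import Defs.
From mathcomp Require Import all_boot all_order all_algebra.
From mathcomp Require Import all_classical all_reals all_analysis.
From mathcomp Require Import measurable_realfun.
From mathcomp Require Import ring lra.
Import Order.TTheory GRing.Theory Num.Theory.
Local Open Scope classical_set_scope.
Local Open Scope ring_scope.

Section Helpers.
Context {d : measure_display} {Om : measurableType d} {R : realType}
  {P : probability Om R}.

Lemma prE {A} : measurable A -> P A = (prob P A)%:E.
Proof. by move=> mA; rewrite /prob fineK// fin_num_measure. Qed.

Lemma pr_ge0 A : 0 <= prob P A.
Proof. by rewrite /prob fine_ge0// measure_ge0. Qed.

Lemma pr_le {A B} : measurable A -> measurable B -> A `<=` B -> prob P A <= prob P B.
Proof.
move=> mA mB AB; rewrite /prob; apply: fine_le; rewrite ?fin_num_measure//.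
exact: (@le_measure _ _ _ P A B ltac:(by rewrite inE) ltac:(by rewrite inE) AB).
Qed.

Lemma prU {A B} : measurable A -> measurable B -> A `&` B = set0 ->
  prob P (A `|` B) = prob P A + prob P B.
Proof.
move=> mA mB AB.
by rewrite /prob (measureU P mA mB AB) fineD// fin_num_measure.
Qed.

Lemma pr0 {A} : measurable A -> prob P A = 0 -> P A = 0%E.
Proof. by move=> mA h; rewrite prE// h. Qed.

Lemma mEF (D : set Om) (X : Om -> R) : measurable_fun D X -> measurable_fun D (EFin \o X).
Proof. by move=> mX; apply/measurable_realfun.measurable_EFinP. Qed.

Definition J (X : Om -> R) (A : set Om) : R := fine (\int[P]_(w in A) (X w)%:E).

Lemma J_ext X Y A : measurable A -> (forall w, A w -> X w = Y w) -> J X A = J Y A.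
Proof.
move=> mA h; rewrite /J; congr fine; apply: eq_integral => w.
by rewrite inE => /h ->.
Qed.

Lemma JU X A B : measurable_fun setT X -> P.-integrable setT (EFin \o X) ->
  measurable A -> measurable B -> A `&` B = set0 ->
  J X (A `|` B) = J X A + J X B.
Proof.
move=> mX iX mA mB AB; rewrite /J integral_setU//.
- rewrite fineD//; apply: integrable_fin_num => //.
    exact: (integrableS measurableT mA (@subsetT _ _) iX).
  exact: (integrableS measurableT mB (@subsetT _ _) iX).
- apply: mEF. apply: measurable_funS mX => //.
- by apply/eqP.
Qed.

Lemma JU2 X X1 X0 A B : measurable_fun setT X ->
  P.-integrable setT (EFin \o X1) -> P.-integrable setT (EFin \o X0) ->
  measurable A -> measurable B -> A `&` B = set0 ->
  (forall w, A w -> X w = X1 w) -> (forall w, B w -> X w = X0 w) ->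
  J X (A `|` B) = J X1 A + J X0 B.
Proof.
move=> mX iX1 iX0 mA mB AB h1 h0; rewrite /J integral_setU//.
- rewrite (eq_integral (fun w => (X1 w)%:E)); last by move=> w; rewrite inE => /h1 ->.
  rewrite [X in _ + X](eq_integral (fun w => (X0 w)%:E)); last by move=> w; rewrite inE => /h0 ->.
  rewrite fineD//; apply: integrable_fin_num => //.
    exact: (integrableS measurableT mA (@subsetT _ _) iX1).
  exact: (integrableS measurableT mB (@subsetT _ _) iX0).
- apply: mEF. apply: measurable_funS mX => //.
- by apply/eqP.
Qed.

Lemma JB X Y A : P.-integrable setT (EFin \o X) -> P.-integrable setT (EFin \o Y) ->
  measurable A -> J (fun w => X w - Y w) A = J X A - J Y A.
Proof.
move=> iX iY mA; rewrite /J.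
rewrite (eq_integral (fun w => (X w)%:E - (Y w)%:E)%E); last by move=> w _; rewrite EFinB.
have iXA := integrableS measurableT mA (@subsetT _ _) iX.
have iYA := integrableS measurableT mA (@subsetT _ _) iY.
rewrite integralB_EFin// fineB//; exact: integrable_fin_num.
Qed.

Lemma J_cexp X A : measurable_fun setT X -> measurable A ->
  J X A = cexp P X A * prob P A.
Proof.
move=> mX mA; rewrite /cexp -/(J X A).
have [h|h] := eqVneq (prob P A) 0.
  rewrite h mulr0 /J null_set_integral//; try exact: pr0.
  apply: mEF; exact: measurable_funS mX.
by rewrite divfK.
Qed.

Lemma J_indic (b : Om -> bool) A : measurable [set w | b w] -> measurable A ->
  J (fun w => (b w)%:R) A = prob P ([set w | b w] `&` A).
Proof.
move=> mb mA; rewrite /J /prob -integral_indic//; congr fine.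
apply: eq_integral => w _; rewrite indicE; congr (_%:R)%:E.
by case: (boolP (b w)) => h; [rewrite mem_set | rewrite memNset //; apply/negP].

Qed.

End Helpers.
Arguments J {d Om R} P X A.

Section BoolSets.
Context {d : measure_display} {Om : measurableType d}.
Implicit Types a b c : Om -> bool.

Lemma mconst (x : bool) : measurable [set w : Om | x].
Proof.
case: x.
  by rewrite (_ : [set w : Om | true] = setT) //; apply/seteqP; split.
by rewrite (_ : [set w : Om | false] = set0) //; apply/seteqP; split.
Qed.

Lemma mor {a b} : measurable [set w | a w] -> measurable [set w | b w] ->
  measurable [set w | a w || b w].
Proof.
move=> ma mb; rewrite (_ : [set w | a w || b w] = [set w | a w] `|` [set w | b w]).
  exact: measurableU.
by apply/seteqP; split=> w /=; [move/orP | move=> ?; apply/orP].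
Qed.

Lemma mand {a b} : measurable [set w | a w] -> measurable [set w | b w] ->
  measurable [set w | a w && b w].
Proof.
move=> ma mb; rewrite (_ : [set w | a w && b w] = [set w | a w] `&` [set w | b w]).
  exact: measurableI.
by apply/seteqP; split=> w /=; [move/andP | move=> ?; apply/andP].
Qed.

Lemma mnot {a} : measurable [set w | a w] -> measurable [set w | ~~ a w].
Proof.
move=> ma; rewrite (_ : [set w | ~~ a w] = ~` [set w | a w]).
  exact: measurableC.
by apply/seteqP; split=> w /=; [move/negP | move=> ?; apply/negP].
Qed.

Lemma m1 (g : bool -> bool) {a} : measurable [set w | a w] ->
  measurable [set w | g (a w)].
Proof.
move=> ma.
rewrite (_ : [set w | g (a w)] = [set w | (a w && g true) || (~~ a w && g false)]).
  exact: (mor (mand ma (mconst (g true))) (mand (mnot ma) (mconst (g false)))).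
by apply/seteqP; split=> w /=; case: (a w) => /=; rewrite ?orbF.
Qed.

Lemma m2 (f : bool -> bool -> bool) {a b} : measurable [set w | a w] ->
  measurable [set w | b w] -> measurable [set w | f (a w) (b w)].
Proof.
move=> ma mb.
rewrite (_ : [set w | f (a w) (b w)] =
  [set w | (a w && f true (b w)) || (~~ a w && f false (b w))]).
  exact: (mor (mand ma (m1 (f true) mb)) (mand (mnot ma) (m1 (f false) mb))).
by apply/seteqP; split=> w /=; case: (a w) => /=; rewrite ?orbF.
Qed.

Lemma m3 (f : bool -> bool -> bool -> bool) {a b c} : measurable [set w | a w] ->
  measurable [set w | b w] -> measurable [set w | c w] ->
  measurable [set w | f (a w) (b w) (c w)].
Proof.
move=> ma mb mc.
rewrite (_ : [set w | f (a w) (b w) (c w)] =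
  [set w | (a w && f true (b w) (c w)) || (~~ a w && f false (b w) (c w))]).
  exact: (mor (mand ma (m2 (f true) mb mc)) (mand (mnot ma) (m2 (f false) mb mc))).
by apply/seteqP; split=> w /=; case: (a w) => /=; rewrite ?orbF.
Qed.

Lemma mb1 {a} (x : bool) : measurable [set w | a w] -> measurable [set w | a w = x].
Proof.
move=> ma; have := m1 (fun y => y == x) ma.
rewrite (_ : [set w | (fun y => y == x) (a w)] = [set w | a w = x]) //.
by apply/seteqP; split=> w /=; move/eqP.
Qed.

End BoolSets.

Theorem theorem1 (d : measure_display) (Om : measurableType d) (R : realType)
  (P : probability Om R) (Y0 Y1 V : Om -> R) (G Tm : Om -> bool)
  (v : bool -> bool -> R) :
  (* measurability and finiteness of expectations *)
  measurable [set w | G w] -> measurable [set w | Tm w] ->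
  measurable_fun setT V -> measurable_fun setT Y0 -> measurable_fun setT Y1 ->
  P.-integrable setT (EFin \o Y0) -> P.-integrable setT (EFin \o Y1) ->
  (* each cell {G = g, T = t} has positive probability *)
  (forall g t, (0 < P (cell G Tm g t))%E) ->
  (* Assumption 1: V independent of T conditional on G *)
  (forall (g t : bool) (B : set R), measurable B ->
     (P ([set w | B (V w)] `&` cell G Tm g t) * P [set w | G w = g]
      = P ([set w | B (V w)] `&` [set w | G w = g])
        * P (cell G Tm g t))%E) ->
  (* Assumption 2 *)
  let D : Om -> R := fun w => (Dtr v V G Tm w)%:R in
  Egt P G Tm D true true > Egt P G Tm D true false ->
  Egt P G Tm D true true - Egt P G Tm D true false
    > Egt P G Tm D false true - Egt P G Tm D false false ->
  (* Assumption 3: common trends *)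
  Egt P G Tm Y0 true true - Egt P G Tm Y0 true false
    = Egt P G Tm Y0 false true - Egt P G Tm Y0 false false ->
  (* Assumption 4 *)
  (forall g : bool,
     cexp P (fun w => Y1 w - Y0 w)
       [set w | G w = g /\ Tm w = true /\ Dpot v V G false w]
     = cexp P (fun w => Y1 w - Y0 w)
       [set w | G w = g /\ Tm w = false /\ Dpot v V G false w]) ->
  let Y : Om -> R := Yobs v V G Tm Y0 Y1 in
  let W_DID := DID P G Tm Y / DID P G Tm D in
  let alpha := (Egt P G Tm D true true - Egt P G Tm D true false)
                 / DID P G Tm D in
  let Ssw : set Om := [set w | (Dpot v V G false w < Dpot v V G true w)%N
                             /\ G w = true] in
  let S' : set Om := [set w | Dpot v V G false w != Dpot v V G true w
                              /\ G w = false] in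
  let Delta := cexp P (fun w => Y1 w - Y0 w) (Ssw `&` [set w | Tm w = true]) in
  let Delta' := cexp P (fun w => Y1 w - Y0 w) (S' `&` [set w | Tm w = true]) in
  (* convention: (1 - alpha) Delta' = 0 when P(S') = 0 *)
  let rest := if P S' == 0%E then 0 else (1 - alpha) * Delta' in
  let A5 := 0 < Egt P G Tm D false true /\
            Egt P G Tm D false true = Egt P G Tm D false false /\
            Egt P G Tm D false false < 1 in
  W_DID = alpha * Delta + rest /\
  (Delta = Delta' \/ A5 -> W_DID = Delta).
Proof.
move=> mG mT mV mY0 mY1 iY0 iY1 hpos hind D hA2a hA2b hA3 hA4 Y W_DID alpha Ssw S' Delta Delta' rest A5.
pose Vge r := [set w | r <= V w].
pose E g t r := Vge r `&` cell G Tm g t.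
pose K s s' g t := (Vge s `&` [set w | ~~ (s' <= V w)]) `&` cell G Tm g t.
pose p g t := prob P (cell G Tm g t).
pose Z := fun w => Y1 w - Y0 w.
have mVge r : measurable (Vge r).
  have := mV measurableT _ (measurable_itv `[r, +oo[); rewrite setTI.
  rewrite (_ : V @^-1` _ = Vge r) //; apply/seteqP; split=> w /=;
    by rewrite in_itv /= andbT.
have mnV r : measurable [set w | ~~ (r <= V w)].
  exact: (@mnot _ _ (fun w => r <= V w) (mVge r)).
have mGg g : measurable [set w | G w = g] := mb1 g mG.
have mc g t : measurable (cell G Tm g t).
  change (measurable ([set w | G w = g] `&` [set w | Tm w = t])).
  exact: (measurableI _ _ (mGg g) (mb1 t mT)).
have mE g t r : measurable (E g t r) := measurableI _ _ (mVge r) (mc g t).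
have mK s s' g t : measurable (K s s' g t).
  exact: (measurableI _ _ (measurableI _ _ (mVge s) (mnV s')) (mc g t)).
have hp g t : 0 < p g t.
  by have := hpos g t; rewrite (prE (mc g t)) lte_fin.
have pGg g : 0 < prob P [set w | G w = g].
  apply: (lt_le_trans (hp g true)); apply: pr_le; [exact: mc|exact: mGg|].
  by move=> w [].
have indep g r : prob P (E g true r) / p g true = prob P (E g false r) / p g false.
  have hVB : [set w | `[r, +oo[%classic (V w)] = Vge r.
    by apply/seteqP; split=> w /=; rewrite in_itv /= andbT.
  have mVG := measurableI _ _ (mVge r) (mGg g).
  have ht t : prob P (E g t r) * prob P [set w | G w = g]
            = prob P (Vge r `&` [set w | G w = g]) * p g t.
    have := hind g t _ (measurable_itv `[r, +oo[); rewrite hVB.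
    rewrite (prE (mE g t r)) (prE (mGg g)) (prE mVG) (prE (mc g t)).
    by rewrite -!EFinM => -[].
  have q0 := pGg g; have p1 := hp g true; have p0 := hp g false.
  have -> : prob P (E g true r) = prob P (Vge r `&` [set w | G w = g]) * p g true
      / prob P [set w | G w = g] by rewrite -ht mulfK // gt_eqF.
  have -> : prob P (E g false r) = prob P (Vge r `&` [set w | G w = g]) * p g false
      / prob P [set w | G w = g] by rewrite -ht mulfK // gt_eqF.
  by field; rewrite !gt_eqF.
have mDpot s : measurable [set w | Dpot v V G s w].
  rewrite (_ : [set w | Dpot v V G s w] =
     [set w | if G w then v true s <= V w else v false s <= V w]).
    exact: (@m3 _ _ (fun g x y => if g then x else y) G (fun w => v true s <= V w)
      (fun w => v false s <= V w) mG (mVge _) (mVge _)).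
  by apply/seteqP; split=> w /=; rewrite /Dpot; case: (G w).
have mDS : measurable [set w | Dtr v V G Tm w].
  rewrite (_ : [set w | Dtr v V G Tm w] =
     [set w | if Tm w then Dpot v V G true w else Dpot v V G false w]).
    exact: (@m3 _ _ (fun g x y => if g then x else y) Tm (fun w => Dpot v V G true w)
      (fun w => Dpot v V G false w) mT (mDpot _) (mDpot _)).
  by apply/seteqP; split=> w /=; rewrite /Dtr; case: (Tm w).
have mD : measurable_fun setT D.
  rewrite (_ : D = \1_[set w | Dtr v V G Tm w]); first exact: measurable_indic.
  apply/funext => w; rewrite indicE /D; congr (_%:R).
  by case: (boolP (Dtr v V G Tm w)) => h; [rewrite mem_set | rewrite memNset //; apply/negP].
have mY : measurable_fun setT Y.
  have -> : Y = (D \* Y1) \+ ((cst 1 \- D) \* Y0) by [].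
  apply: measurable_funD; apply: measurable_funM => //; apply: measurable_funB => //.
have mZ : measurable_fun setT Z by exact: measurable_funB.
have iZ : P.-integrable setT (EFin \o Z).
  rewrite (_ : EFin \o Z = ((EFin \o Y1) \- (EFin \o Y0))%E); first exact: integrableB.
  by apply/funext => w /=; rewrite EFinB.
have ED g t : Egt P G Tm D g t = prob P (E g t (v g t)) / p g t.
  change (J P D (cell G Tm g t) / p g t = prob P (E g t (v g t)) / p g t).
  rewrite (J_ext D (fun w => ((v g t <= V w)%R : bool)%:R) (cell G Tm g t) (mc g t)); last first.
    by move=> w [hg ht]; rewrite /D /Dtr /Dpot hg ht.
  by rewrite (J_indic (fun w => v g t <= V w) (cell G Tm g t) (mVge _) (mc g t)).
have EY g t : Egt P G Tm Y g t = Egt P G Tm Y0 g t + J P Z (E g t (v g t)) / p g t.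
  pose F := cell G Tm g t `&` [set w | ~~ (v g t <= V w)].
  have mF : measurable F := measurableI _ _ (mc g t) (mnV _).
  have hc : cell G Tm g t = E g t (v g t) `|` F.
    apply/seteqP; split=> w /=.
      by move=> cw; case: (boolP (v g t <= V w)) => h; [left | right].
    by case=> [[_ ?]|[? _]].
  have hEF : E g t (v g t) `&` F = set0.
    apply/seteqP; split=> w //= -[[h _] [_ h']]; by case/negP: h'.
  change (J P Y (cell G Tm g t) / p g t
    = J P Y0 (cell G Tm g t) / p g t + J P Z (E g t (v g t)) / p g t).
  rewrite -mulrDl; congr (_ / _).
  have h1 : forall w, E g t (v g t) w -> Y w = Y1 w.
    move=> w [h [hg ht]]; rewrite /Y /Yobs /Dtr /Dpot hg ht h.
    by rewrite mul1r subrr mul0r addr0.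
  have h0 : forall w, F w -> Y w = Y0 w.
    move=> w [[hg ht] h]; rewrite /Y /Yobs /Dtr /Dpot hg ht (negbTE h).
    by rewrite mul0r add0r subr0 mul1r.
  rewrite hc (JU2 Y Y1 Y0 (E g t (v g t)) F mY iY1 iY0 (mE _ _ _) mF hEF h1 h0).
  rewrite (JU Y0 (E g t (v g t)) F mY0 iY0 (mE _ _ _) mF hEF).
  rewrite /Z (JB Y1 Y0 (E g t (v g t)) iY1 iY0 (mE _ _ _)).
  ring.
have hA4' g : J P Z (E g true (v g false)) / p g true
             = J P Z (E g false (v g false)) / p g false.
  have hs t : [set w | G w = g /\ Tm w = t /\ Dpot v V G false w] = E g t (v g false).
    apply/seteqP; split=> w /=.
      by move=> [hg [ht h]]; rewrite -hg; do !split.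
    by move=> [h [hg ht]]; rewrite /Dpot hg; do !split.
  have := hA4 g; rewrite (hs true) (hs false) => hc.
  rewrite (J_cexp Z _ mZ (mE _ _ _)) (J_cexp Z _ mZ (mE _ _ _)) hc -!mulrA.
  by rewrite indep.
have hstrip g t s s' : s <= s' ->
    E g t s = E g t s' `|` K s s' g t /\ E g t s' `&` K s s' g t = set0.
  move=> hss; split.
    apply/seteqP; split=> w /=.
      move=> [h cw]; case: (boolP (s' <= V w)) => h'; [left | right] => //.
    case=> [[h cw]|[[h _] cw]]; split => //; exact: le_trans hss h.
  apply/seteqP; split=> w // -[[h _] [[_ h'] _]]; by case/negP: h'.
have hpr g t s s' : s <= s' ->
    prob P (E g t s) = prob P (E g t s') + prob P (K s s' g t).
  by move=> /(hstrip g t) [-> h]; exact: prU (mE _ _ _) (mK _ _ _ _) h.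
have hJ g t s s' : s <= s' ->
    J P Z (E g t s) = J P Z (E g t s') + J P Z (K s s' g t).
  by move=> /(hstrip g t) [-> h]; exact: JU Z _ _ mZ iZ (mE _ _ _) (mK _ _ _ _) h.
have hpn g t : p g t != 0 by rewrite gt_eqF // hp.
have hlt1 : v true true < v true false.
  rewrite ltNge; apply/negP => hle.
  move: hA2a; rewrite !ED -(indep true (v true false)).
  apply/negP; rewrite -leNgt.
  apply: ler_wpM2r; first by rewrite invr_ge0 ltW.
  apply: pr_le; [exact: mE|exact: mE|].
  by move=> w [h cw]; split => //; exact: le_trans hle h.
have hSsw : Ssw `&` [set w | Tm w = true] = K (v true true) (v true false) true true.
  rewrite /Ssw /K /Vge /cell; apply/seteqP; split=> w /=.
    move=> [[+ hg] ht]; rewrite /Dpot hg.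
    by case: (v true false <= V w); case: (v true true <= V w) => //= _; do !split.
  move=> [[h1 h0] [hg ht]]; rewrite /Dpot hg (negbTE h0) h1.
  by do !split.
have H1 : Egt P G Tm Y true true - Egt P G Tm Y true false
   = (Egt P G Tm Y0 true true - Egt P G Tm Y0 true false)
     + Delta * (Egt P G Tm D true true - Egt P G Tm D true false).
  have hl := ltW hlt1.
  rewrite !EY !ED -(indep true (v true false)) -(hA4' true).
  rewrite (hpr _ _ _ _ hl) (hJ _ _ _ _ hl).
  have -> : Delta = cexp P Z (K (v true true) (v true false) true true) by rewrite /Delta hSsw.
  rewrite (J_cexp Z _ mZ (mK _ _ _ _)).
  by field.
have mS' : measurable S'.
  exact: (measurableI _ _ (@m2 _ _ (fun x y => x != y) _ _ (mDpot false) (mDpot true)) (mGg false)).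
have mS'T : measurable (S' `&` [set w | Tm w = true]) := measurableI _ _ mS' (mb1 true mT).
have hS0 : P S' = 0%E -> prob P (S' `&` [set w | Tm w = true]) = 0.
  move=> h; apply/eqP; rewrite eq_le pr_ge0 andbT.
  have <- : prob P S' = 0 by rewrite /prob h.
  by apply: pr_le => //; exact: subIsetl.
have H0 : (Egt P G Tm Y false true - Egt P G Tm Y false false
   = (Egt P G Tm Y0 false true - Egt P G Tm Y0 false false)
     + Delta' * (Egt P G Tm D false true - Egt P G Tm D false false))
   /\ (P S' = 0%E -> Egt P G Tm D false true - Egt P G Tm D false false = 0).
  rewrite !EY !ED -(indep false (v false false)) -(hA4' false).
  case: (leP (v false true) (v false false)) => hl.
  - have hS : S' `&` [set w | Tm w = true] = K (v false true) (v false false) false true.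
      rewrite /S' /K /Vge /cell; apply/seteqP; split=> w /=.
        move=> [[hne hg] ht]; rewrite /Dpot hg in hne.
        have h0 : ~~ (v false false <= V w).
          by apply/negP => h0; move: hne; rewrite h0 (le_trans hl h0).
        have h1 : v false true <= V w.
          by move: hne; rewrite (negbTE h0); case: (v false true <= V w).
        by do !split.
      move=> [[h1 h0] [hg ht]]; rewrite /Dpot hg (negbTE h0) h1.
      by do !split.
    have -> : Delta' = cexp P Z (K (v false true) (v false false) false true).
      by rewrite /Delta' hS.
    rewrite (hpr _ _ _ _ hl) (hJ _ _ _ _ hl) (J_cexp Z _ mZ (mK _ _ _ _)).
    split; first by field.
    by move=> /hS0; rewrite hS => ->; field.
  - have hl' := ltW hl.
    have hS : S' `&` [set w | Tm w = true] = K (v false false) (v false true) false true.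
      rewrite /S' /K /Vge /cell; apply/seteqP; split=> w /=.
        move=> [[hne hg] ht]; rewrite /Dpot hg in hne.
        have h0 : ~~ (v false true <= V w).
          by apply/negP => h0; move: hne; rewrite h0 (le_trans hl' h0).
        have h1 : v false false <= V w.
          by move: hne; rewrite (negbTE h0); case: (v false false <= V w).
        by do !split.
      move=> [[h1 h0] [hg ht]]; rewrite /Dpot hg (negbTE h0) h1.
      by do !split.
    have -> : Delta' = cexp P Z (K (v false false) (v false true) false true).
      by rewrite /Delta' hS.
    rewrite [prob P (E false true (v false false))](hpr _ _ _ _ hl').
    rewrite [J P Z (E false true (v false false))](hJ _ _ _ _ hl').
    rewrite (J_cexp Z _ mZ (mK _ _ _ _)).
    split; first by field.
    by move=> /hS0; rewrite hS => ->; field.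
have [H0a H0b] := H0.
have DIDD : DID P G Tm D = (Egt P G Tm D true true - Egt P G Tm D true false)
    - (Egt P G Tm D false true - Egt P G Tm D false false) by [].
have DIDY : DID P G Tm Y = (Egt P G Tm Y true true - Egt P G Tm Y true false)
    - (Egt P G Tm Y false true - Egt P G Tm Y false false) by [].
have hW : W_DID = (Delta * (Egt P G Tm D true true - Egt P G Tm D true false)
    - Delta' * (Egt P G Tm D false true - Egt P G Tm D false false))
    / ((Egt P G Tm D true true - Egt P G Tm D true false)
    - (Egt P G Tm D false true - Egt P G Tm D false false)).
  rewrite /W_DID DIDY DIDD H1 H0a hA3; congr (_ / _); ring.
have hal : alpha = (Egt P G Tm D true true - Egt P G Tm D true false)
    / ((Egt P G Tm D true true - Egt P G Tm D true false)
    - (Egt P G Tm D false true - Egt P G Tm D false false)) by [].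
move: hA2b hW hal H0b.
set x := Egt P G Tm D true true - Egt P G Tm D true false.
set y := Egt P G Tm D false true - Egt P G Tm D false false.
move=> hxy hW hal H0b.
have hxy0 : x - y != 0 by rewrite gt_eqF // subr_gt0.
have hrest : rest = (1 - alpha) * Delta'.
  rewrite /rest; case: ifP => // /eqP h.
  rewrite hal (H0b h) subr0 in hxy0 *.
  by rewrite divff // subrr mul0r.
split.
  by rewrite hW hrest hal; field.
move=> [hD|[_ [hy _]]].
  by rewrite hW -hD; field.
have y0 : y = 0 by rewrite /y hy subrr.
by move: hxy0; rewrite hW y0 mulr0 !subr0 => hx; field.
Qed.
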